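(* Let $H$ be an infinite-dimensional Hilbert $*$-space with hermitian basis $F$, and fix distinct $u,e\in F$. Let $T\in\mathcal B(H)$ be the unitary with $Tu=e$, $Te=u$ and $Tf=f$ for $f\in F\setminus\{u,e\}$. Then $T(\mathfrak c_u)=\mathfrak c_e$, $T^{(n)}(\min\mathfrak c_u\cap M_n(H))=\min\mathfrak c_e\cap M_n(H)$ and $T^{(n)}(\max\mathfrak c_u\cap M_n(H))=\max\mathfrak c_e\cap M_n(H)$ for all $n$; in particular $T:(H,\max\mathfrak c_u)\to(H,\max\mathfrak c_e)$ is a unital matrix positive map. Nevertheless $T$ is not separable: there is no sequence of linear functionals $q_l$ on $H$ that are nonnegative on $\mathfrak c_u$ and vectors $p_l\in\mathfrak c_e$ with $T\zeta=\lim_k\sum_{l=1}^k q_l(\zeta)p_l$ for all $\zeta\in H$.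
   Context: A Hilbert $*$-space is a complex Hilbert space (inner product linear in the first variable) with a conjugate-linear $\zeta\mapsto\zeta^*$, $\zeta^{**}=\zeta$, $(\zeta^*,\eta^* )=\overline{(\zeta,\eta)}$; a hermitian basis is an orthonormal basis of hermitian vectors. For a hermitian unit vector $w$, the unital cone is $\mathfrak c_w=\{\zeta\in H_h:\|\zeta\|\le\sqrt2(\zeta,w)\}$. Matrices over $H$ or the conjugate space $\overline H$ carry the involution $[x_{ij}]^*=[x_{ji}^*]$; $T^{(n)}[\zeta_{ij}]=[T\zeta_{ij}]$. A state of $\mathfrak c_w$ is a linear functional $\sigma$ with $\sigma(w)=1$, $\sigma(\mathfrak c_w)\ge0$; $\min\mathfrak c_w\cap M_n(H)=\{\zeta\in M_n(H)_h:[\sigma(\zeta_{ij})]\ge0\ \forall$ states $\sigma\}$. With $\mathfrak c_w^\boxdot=\{\bar\eta\in M_n(\overline H)_h:[(\xi,\eta_{st})]\ge0\ \forall\xi\in\mathfrak c_w\}$, $\max\mathfrak c_w\cap M_n(H)=\{\zeta\in M_n(H)_h:[(\zeta_{ik},\eta_{jl})]_{(i,j),(k,l)}\ge0\ \forall\bar\eta\in\mathfrak c_w^\boxdot\}$. *)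

(* Defs.v *)
From Stdlib Require Import Reals List.
Open Scope R_scope.

Record Cx := mkC { re : R; im : R }.
Definition C0 : Cx := mkC 0 0.
Definition C1 : Cx := mkC 1 0.
Definition RtoC (r : R) : Cx := mkC r 0.
Definition Cadd (a b : Cx) : Cx := mkC (re a + re b) (im a + im b).
Definition Copp (a : Cx) : Cx := mkC (- re a) (- im a).
Definition Cmul (a b : Cx) : Cx :=
  mkC (re a * re b - im a * im b) (re a * im b + im a * re b).
Definition Cconj (a : Cx) : Cx := mkC (re a) (- im a).

Definition Cnonneg (a : Cx) : Prop := im a = 0 /\ 0 <= re a.

Fixpoint Csum (n : nat) (f : nat -> Cx) : Cx :=
  match n with O => C0 | S m => Cadd (Csum m f) (f m) end.

(** * Hilbert *-spaces: complex Hilbert spaces (inner product linear in the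
    first variable) with a conjugate-linear involution [hstar] such that
    (star x, star y) = conj (x, y). *)
Record HStar := {
  hV :> Type;
  hadd : hV -> hV -> hV;
  hzero : hV;
  hopp : hV -> hV;
  hscal : Cx -> hV -> hV;
  hinner : hV -> hV -> Cx;
  hstar : hV -> hV;
  hadd_comm : forall x y, hadd x y = hadd y x;
  hadd_assoc : forall x y z, hadd x (hadd y z) = hadd (hadd x y) z;
  hadd_zero : forall x, hadd x hzero = x;
  hadd_opp : forall x, hadd x (hopp x) = hzero;
  hscal_one : forall x, hscal C1 x = x;
  hscal_assoc : forall a b x, hscal a (hscal b x) = hscal (Cmul a b) x;
  hscal_addv : forall a x y, hscal a (hadd x y) = hadd (hscal a x) (hscal a y);
  hscal_addc : forall a b x, hscal (Cadd a b) x = hadd (hscal a x) (hscal b x);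
  hinner_addl : forall x y z, hinner (hadd x y) z = Cadd (hinner x z) (hinner y z);
  hinner_scall : forall a x z, hinner (hscal a x) z = Cmul a (hinner x z);
  hinner_conj : forall x y, hinner y x = Cconj (hinner x y);
  hinner_pos : forall x, 0 <= re (hinner x x);
  hinner_def : forall x, hinner x x = C0 -> x = hzero;
  hcomplete : forall s : nat -> hV,
    (forall eps, eps > 0 -> exists N, forall m k, (m >= N)%nat -> (k >= N)%nat ->
        sqrt (re (hinner (hadd (s m) (hopp (s k))) (hadd (s m) (hopp (s k))))) < eps) ->
    exists x, forall eps, eps > 0 -> exists N, forall m, (m >= N)%nat ->
        sqrt (re (hinner (hadd (s m) (hopp x)) (hadd (s m) (hopp x)))) < eps;
  hstar_add : forall x y, hstar (hadd x y) = hadd (hstar x) (hstar y);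
  hstar_scal : forall a x, hstar (hscal a x) = hscal (Cconj a) (hstar x);
  hstar_invol : forall x, hstar (hstar x) = x;
  hstar_inner : forall x y, hinner (hstar x) (hstar y) = Cconj (hinner x y)
}.

Arguments hadd {h}. Arguments hzero {h}. Arguments hopp {h}.
Arguments hscal {h}. Arguments hinner {h}. Arguments hstar {h}.

Section HDefs.
Variable H : HStar.

Definition hnorm (x : H) : R := sqrt (re (hinner x x)).
Definition hsub (x y : H) : H := hadd x (hopp y).

Fixpoint hsum (n : nat) (f : nat -> H) : H :=
  match n with O => hzero | S m => hadd (hsum m f) (f m) end.

Definition in_span (l : list H) (x : H) : Prop :=
  exists c : nat -> Cx,
    x = hsum (length l) (fun i => hscal (c i) (nth i l hzero)).

Definition infinite_dim : Prop :=
  forall l : list H, exists x : H, ~ in_span l x.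

Definition hermitian (x : H) : Prop := hstar x = x.

Definition hermitian_basis (F : H -> Prop) : Prop :=
  (forall f, F f -> hermitian f) /\
  (forall f, F f -> hinner f f = C1) /\
  (forall f g, F f -> F g -> f <> g -> hinner f g = C0) /\
  (forall x, (forall f, F f -> hinner x f = C0) -> x = hzero).

Definition cone (w : H) (z : H) : Prop :=
  hermitian z /\ hnorm z <= sqrt 2 * re (hinner z w).

Definition linear_fun (s : H -> Cx) : Prop :=
  (forall x y, s (hadd x y) = Cadd (s x) (s y)) /\
  (forall a x, s (hscal a x) = Cmul a (s x)).

Definition linear_op (T : H -> H) : Prop :=
  (forall x y, T (hadd x y) = hadd (T x) (T y)) /\
  (forall a x, T (hscal a x) = hscal a (T x)).

Definition state (w : H) (s : H -> Cx) : Prop :=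
  linear_fun s /\ s w = C1 /\ (forall z, cone w z -> Cnonneg (s z)).

(** n x n matrices are represented by functions [nat -> nat -> _];
    only the entries with indices < n are relevant. *)
Definition mat_hermitian (n : nat) (z : nat -> nat -> H) : Prop :=
  forall i j, (i < n)%nat -> (j < n)%nat -> z i j = hstar (z j i).

End HDefs.

Arguments hnorm {H}. Arguments hsub {H}. Arguments hsum {H}.
Arguments hermitian {H}. Arguments cone {H}. Arguments linear_fun {H}.
Arguments linear_op {H}. Arguments state {H}. Arguments mat_hermitian {H}.
Arguments hermitian_basis {H}.

Definition psd (n : nat) (a : nat -> nat -> Cx) : Prop :=
  forall al : nat -> Cx,
    Cnonneg (Csum n (fun i => Csum n (fun j =>
       Cmul (Cmul (Cconj (al i)) (a i j)) (al j)))).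

(** positive semidefinite n^2 x n^2 complex matrix, with rows and columns
    indexed by pairs: [a i j k l] is the entry in row (i,j), column (k,l) *)
Definition psd2 (n : nat) (a : nat -> nat -> nat -> nat -> Cx) : Prop :=
  forall al : nat -> nat -> Cx,
    Cnonneg (Csum n (fun i => Csum n (fun j => Csum n (fun k => Csum n (fun l =>
       Cmul (Cmul (Cconj (al i j)) (a i j k l)) (al k l)))))).

Section Cones.
Variable H : HStar.

Definition min_cone (w : H) (n : nat) (z : nat -> nat -> H) : Prop :=
  mat_hermitian n z /\
  forall s, state w s -> psd n (fun i j => s (z i j)).

(** c_w^⊡ ∩ M_n(conj H): an element [bar eta] of M_n(conj H) is represented
    by the matrix [eta] over H; hermitian in M_n(conj H) means
    eta_st = (eta_ts)^*. *)
Definition box_cone (w : H) (n : nat) (eta : nat -> nat -> H) : Prop :=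
  mat_hermitian n eta /\
  forall x, cone w x -> psd n (fun s t => hinner x (eta s t)).

Definition max_cone (w : H) (n : nat) (z : nat -> nat -> H) : Prop :=
  mat_hermitian n z /\
  forall eta, box_cone w n eta ->
    psd2 n (fun i j k l => hinner (z i k) (eta j l)).

End Cones.

Arguments min_cone {H}. Arguments box_cone {H}. Arguments max_cone {H}.

Definition ampl {H : HStar} (T : H -> H) (z : nat -> nat -> H) : nat -> nat -> H :=
  fun i j => T (z i j).

Definition mat_image {H : HStar} (T : H -> H) (n : nat)
  (P : (nat -> nat -> H) -> Prop) (z : nat -> nat -> H) : Prop :=
  exists y, P y /\ forall i j, (i < n)%nat -> (j < n)%nat -> T (y i j) = z i j.

Definition mat_set_eq {H : HStar} (n : nat)
  (P Q : (nat -> nat -> H) -> Prop) : Prop :=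
  forall z, P z <-> Q z.

(* Main.v *)
Require Import Defs.
From Stdlib Require Import Reals List Lra Lia Classical.
Open Scope R_scope.

Lemma Cext (a b : Cx) : re a = re b -> im a = im b -> a = b.
Proof. destruct a, b; simpl; intros; subst; reflexivity. Qed.

Lemma inner_zero_l (H : HStar) (z : H) : hinner hzero z = C0.
Proof.
  assert (E := hinner_addl H hzero hzero z). rewrite hadd_zero in E.
  destruct (hinner hzero z) as [a b]; unfold Cadd in E; simpl in E.
  injection E; intros; apply Cext; simpl; lra.
Qed.

Lemma inner_opp_l (H : HStar) (x z : H) : hinner (hopp x) z = Copp (hinner x z).
Proof.
  assert (E := hinner_addl H x (hopp x) z). rewrite hadd_opp, inner_zero_l in E.
  destruct (hinner x z) as [a b], (hinner (hopp x) z) as [c d]; unfold Cadd in E; simpl in E.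
  injection E; intros; apply Cext; simpl; lra.
Qed.

Lemma eq_of_inner (H : HStar) (F : H -> Prop) (a b : H) :
  (forall x, (forall f, F f -> hinner x f = C0) -> x = hzero) ->
  (forall f, F f -> hinner a f = hinner b f) -> a = b.
Proof.
  intros Hc Hab.
  assert (E : hadd a (hopp b) = hzero).
  { apply Hc; intros f Hf. rewrite hinner_addl, inner_opp_l, (Hab f Hf).
    destruct (hinner b f); apply Cext; simpl; lra. }
  rewrite <- (hadd_zero H a), <- (hadd_opp H b), (hadd_comm H b), hadd_assoc, E,
    hadd_comm, hadd_zero. reflexivity.
Qed.

Lemma re_inner_sym (H : HStar) (x y : H) : re (hinner y x) = re (hinner x y).
Proof. rewrite hinner_conj. reflexivity. Qed.

Lemma re_inner_scall (H : HStar) (c : R) (x y : H) :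
  re (hinner (hscal (RtoC c) x) y) = c * re (hinner x y).
Proof. rewrite hinner_scall. simpl. ring. Qed.

Lemma re_inner_scalr (H : HStar) (c : R) (x y : H) :
  re (hinner x (hscal (RtoC c) y)) = c * re (hinner x y).
Proof. rewrite re_inner_sym, re_inner_scall, re_inner_sym. reflexivity. Qed.

Lemma re_inner_addr (H : HStar) (x y z : H) :
  re (hinner z (hadd x y)) = re (hinner z x) + re (hinner z y).
Proof. rewrite re_inner_sym, hinner_addl. simpl. rewrite !(re_inner_sym H z). reflexivity. Qed.

Lemma re_inner_addl (H : HStar) (x y z : H) :
  re (hinner (hadd x y) z) = re (hinner x z) + re (hinner y z).
Proof. rewrite hinner_addl. reflexivity. Qed.

Definition Lc (H : HStar) (x : H) (c : R) (g : H) : H := hadd x (hscal (RtoC c) g).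

Lemma Lc_norm (H : HStar) (x : H) c g : re (hinner g g) = 1 ->
  re (hinner (Lc H x c g) (Lc H x c g)) = re (hinner x x) + 2 * c * re (hinner x g) + c * c.
Proof.
  intro Hg; unfold Lc.
  rewrite re_inner_addl, !re_inner_addr, !re_inner_scall, !re_inner_scalr, Hg,
    (re_inner_sym H x g). ring.
Qed.

Lemma Lc_inner (H : HStar) (x : H) c g k :
  re (hinner (Lc H x c g) k) = re (hinner x k) + c * re (hinner g k).
Proof. unfold Lc. rewrite re_inner_addl, re_inner_scall. reflexivity. Qed.

Lemma re_inner_sq_le (H : HStar) (x : H) g : re (hinner g g) = 1 ->
  re (hinner x g) * re (hinner x g) <= re (hinner x x).
Proof.
  intro Hg. pose proof (hinner_pos H (Lc H x (- re (hinner x g)) g)) as P.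
  rewrite Lc_norm in P by exact Hg. nra.
Qed.

Definition Tgood (H : HStar) (F : H -> Prop) (u e : H) (T : H -> H) : Prop :=
  hermitian_basis F /\ F u /\ F e /\ u <> e /\ linear_op T /\
  (forall x y, hinner (T x) (T y) = hinner x y) /\
  T u = e /\ T e = u /\ (forall f, F f -> f <> u -> f <> e -> T f = f).

Section S.
Variables (H : HStar) (F : H -> Prop) (u e : H) (T : H -> H).
Hypothesis G : Tgood H F u e T.

Lemma TF f : F f -> F (T f) /\ T (T f) = f.
Proof.
  destruct G as (HF & Hu & He & Hue & Hl & Hun & Htu & Hte & Htf).
  intro Hf. destruct (classic (f = u)) as [->|Nu].
  - rewrite Htu, Hte. auto.
  - destruct (classic (f = e)) as [->|Ne].
    + rewrite Hte, Htu. auto.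
    + rewrite !(Htf f Hf Nu Ne). auto.
Qed.

Lemma T_inner_F y f : F f -> hinner (T y) f = hinner y (T f).
Proof.
  intro Hf. destruct G as (HF & Hu & He & Hue & Hl & Hun & _).
  destruct (TF f Hf) as [_ E]. rewrite <- E at 1. apply Hun.
Qed.

Lemma TT x : T (T x) = x.
Proof.
  destruct G as (HF & _). apply (eq_of_inner H F); [apply HF|].
  intros f Hf. rewrite T_inner_F by exact Hf. rewrite T_inner_F by (apply TF; exact Hf).
  destruct (TF f Hf) as [_ ->]. reflexivity.
Qed.

Lemma Tstar x : T (hstar x) = hstar (T x).
Proof.
  destruct G as (HF & _). apply (eq_of_inner H F); [apply HF|].
  intros f Hf. destruct HF as (Hh & _).
  destruct (TF f Hf) as [HTf _].
  rewrite T_inner_F by exact Hf.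
  rewrite <- (Hh f Hf) at 2. rewrite hstar_inner, T_inner_F by exact Hf.
  rewrite <- (Hh _ HTf) at 1. rewrite hstar_inner. reflexivity.
Qed.

Lemma Tinner x y : hinner (T x) (T y) = hinner x y.
Proof. destruct G as (_ & _ & _ & _ & _ & Hun & _). apply Hun. Qed.

Lemma Tinner_swap x y : hinner (T x) y = hinner x (T y).
Proof. rewrite <- (TT y) at 1. apply Tinner. Qed.

Lemma cone_T w w' x : T w = w' -> cone w x -> cone w' (T x).
Proof.
  intros Hw [Hh Hn]. split.
  - unfold hermitian in *. rewrite <- Tstar, Hh. reflexivity.
  - unfold hnorm. rewrite Tinner, <- Hw, Tinner. exact Hn.
Qed.

Lemma state_T w w' s : T w' = w -> state w s -> state w' (fun x => s (T x)).
Proof.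
  intros Hw [[Ha Hs] [H1 Hp]].
  destruct G as (_ & _ & _ & _ & [La Ls] & _).
  split; [split|split].
  - intros x y. rewrite La. apply Ha.
  - intros a x. rewrite Ls. apply Hs.
  - rewrite Hw. exact H1.
  - intros z Hz. apply Hp. apply (cone_T w'); assumption.
Qed.
End S.

Lemma Csum_ext n f g : (forall i, (i < n)%nat -> f i = g i) -> Csum n f = Csum n g.
Proof.
  induction n; intros E; simpl; [reflexivity|].
  rewrite IHn by (intros; apply E; lia). rewrite E by lia. reflexivity.
Qed.

Lemma psd_ext n a b : (forall i j, (i < n)%nat -> (j < n)%nat -> a i j = b i j) ->
  psd n a -> psd n b.
Proof.
  intros E P al. specialize (P al).
  erewrite Csum_ext; [exact P|]. intros i Hi. simpl.
  apply Csum_ext. intros j Hj. rewrite E by assumption. reflexivity.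
Qed.

Lemma psd2_ext n a b :
  (forall i j k l, (i < n)%nat -> (j < n)%nat -> (k < n)%nat -> (l < n)%nat ->
     a i j k l = b i j k l) ->
  psd2 n a -> psd2 n b.
Proof.
  intros E P al. specialize (P al).
  erewrite Csum_ext; [exact P|]. intros i Hi. simpl.
  apply Csum_ext. intros j Hj. apply Csum_ext. intros k Hk. apply Csum_ext. intros l Hl.
  rewrite E by assumption. reflexivity.
Qed.

Section S.
Variables (H : HStar) (F : H -> Prop) (u e : H) (T : H -> H).
Hypothesis G : Tgood H F u e T.

Lemma herm_T n z : mat_hermitian n z -> mat_hermitian n (ampl T z).
Proof.
  intros Hz i j Hi Hj. unfold ampl. rewrite Hz by assumption. apply (Tstar H F u e T G).
Qed.

Lemma min_T w w' n z : T w' = w -> T w = w' -> min_cone w' n z -> min_cone w n (ampl T z).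
Proof.
  intros E1 E2 [Hh Hp]. split; [apply herm_T; exact Hh|].
  intros s Hs. apply (Hp (fun x => s (T x))). apply (state_T H F u e T G w); assumption.
Qed.

Lemma box_T w w' n eta : T w' = w -> T w = w' -> box_cone w' n eta -> box_cone w n (ampl T eta).
Proof.
  intros E1 E2 [Hh Hp]. split; [apply herm_T; exact Hh|].
  intros x Hx. unfold ampl.
  apply (psd_ext n (fun s t => hinner (T x) (eta s t))).
  - intros; rewrite (Tinner_swap H F u e T G). reflexivity.
  - apply Hp. apply (cone_T H F u e T G w); assumption.
Qed.

Lemma max_T w w' n z : T w' = w -> T w = w' -> max_cone w' n z -> max_cone w n (ampl T z).
Proof.
  intros E1 E2 [Hh Hp]. split; [apply herm_T; exact Hh|].
  intros eta He. unfold ampl.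
  apply (psd2_ext n (fun i j k l => hinner (z i k) (ampl T eta j l))).
  - intros; unfold ampl. rewrite <- (Tinner_swap H F u e T G). reflexivity.
  - apply Hp. apply (box_T w' w); assumption.
Qed.

Lemma min_ext (w : H) n z z' : (forall i j, (i < n)%nat -> (j < n)%nat -> z i j = z' i j) ->
  min_cone w n z -> min_cone w n z'.
Proof.
  intros E [Hh Hp]. split.
  - intros i j Hi Hj. rewrite <- !E by assumption. apply Hh; assumption.
  - intros s Hs. apply (psd_ext n (fun i j => s (z i j))); [|apply Hp, Hs].
    intros; rewrite E by assumption; reflexivity.
Qed.

Lemma max_ext (w : H) n z z' : (forall i j, (i < n)%nat -> (j < n)%nat -> z i j = z' i j) ->
  max_cone w n z -> max_cone w n z'.
Proof.
  intros E [Hh Hp]. split.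
  - intros i j Hi Hj. rewrite <- !E by assumption. apply Hh; assumption.
  - intros eta He. apply (psd2_ext n (fun i j k l => hinner (z i k) (eta j l))); [|apply Hp, He].
    intros; rewrite E by assumption; reflexivity.
Qed.
End S.

Lemma herm_Lc (H : HStar) (x g : H) c : hermitian x -> hermitian g -> hermitian (Lc H x c g).
Proof.
  unfold hermitian, Lc. intros Hx Hg. rewrite hstar_add, hstar_scal, Hx, Hg.
  f_equal. f_equal. apply Cext; simpl; lra.
Qed.

Lemma im_inner_herm (H : HStar) (x y : H) : hermitian x -> hermitian y -> im (hinner x y) = 0.
Proof.
  unfold hermitian; intros Hx Hy. pose proof (hstar_inner H x y) as E.
  rewrite Hx, Hy in E. destruct (hinner x y) as [a b]. unfold Cconj in E; simpl in *.
  injection E; lra.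
Qed.

Lemma sqrt_lt_sq r eps : 0 <= r -> sqrt r < eps -> r < eps * eps.
Proof.
  intros Hr Hs. pose proof (sqrt_sqrt r Hr). pose proof (sqrt_pos r). nra.
Qed.

Lemma sqrt_le_sq r a : 0 <= r -> sqrt r <= sqrt 2 * a -> 0 <= a /\ r <= 2 * a * a.
Proof.
  intros Hr Hs. pose proof (sqrt_sqrt r Hr). pose proof (sqrt_pos r).
  pose proof (sqrt_sqrt 2 ltac:(lra)). pose proof (sqrt_pos 2).
  assert (0 < sqrt 2) by (apply sqrt_lt_R0; lra).
  assert (0 <= a) by nra. split; [exact H4|]. nra.
Qed.

Section Sep.
Variables (H : HStar) (u e f1 f2 : H).
Hypotheses (hu : hermitian u) (he : hermitian e) (hf1 : hermitian f1) (hf2 : hermitian f2)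
  (nu : re (hinner u u) = 1) (ne : re (hinner e e) = 1)
  (n1 : re (hinner f1 f1) = 1) (n2 : re (hinner f2 f2) = 1)
  (o1 : re (hinner u f1) = 0) (o2 : re (hinner u f2) = 0) (o3 : re (hinner f1 f2) = 0)
  (o4 : re (hinner e f1) = 0) (o5 : re (hinner e f2) = 0).

Lemma term_le (q : H -> Cx) (p : H) : linear_fun q -> (forall x, cone u x -> Cnonneg (q x)) ->
  cone e p ->
  re (q f1) * re (hinner p f1) + re (q f2) * re (hinner p f2) <= re (q u) * re (hinner p e).
Proof.
  intros [Qa Qs] Qp [Hp Hn].
  set (a := re (hinner p e)). set (b1 := re (hinner p f1)). set (b2 := re (hinner p f2)).
  set (r := re (hinner p p)).
  destruct (sqrt_le_sq r a (hinner_pos H p) Hn) as [Ha Hr].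
  (* Bessel *)
  set (p1 := Lc H p (- a) e). set (p2 := Lc H p1 (- b1) f1). set (p3 := Lc H p2 (- b2) f2).
  assert (E1 : re (hinner p1 p1) = r - a * a).
  { unfold p1. rewrite Lc_norm by exact ne. fold r a. ring. }
  assert (E1' : re (hinner p1 f1) = b1).
  { unfold p1. rewrite Lc_inner, o4. fold b1. ring. }
  assert (E1'' : re (hinner p1 f2) = b2).
  { unfold p1. rewrite Lc_inner, o5. fold b2. ring. }
  assert (E2 : re (hinner p2 p2) = r - a * a - b1 * b1).
  { unfold p2. rewrite Lc_norm by exact n1. rewrite E1, E1'. ring. }
  assert (E2' : re (hinner p2 f2) = b2).
  { unfold p2. rewrite Lc_inner, o3, E1''. ring. }
  assert (E3 : re (hinner p3 p3) = r - a * a - b1 * b1 - b2 * b2).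
  { unfold p3. rewrite Lc_norm by exact n2. rewrite E2, E2'. ring. }
  pose proof (hinner_pos H p3) as P3. rewrite E3 in P3.
  assert (Bes : b1 * b1 + b2 * b2 <= a * a) by nra.
  assert (S2 : 1 <= sqrt 2).
  { rewrite <- sqrt_1. apply sqrt_le_1_alt. lra. }
  assert (Qu : 0 <= re (q u)).
  { destruct (Qp u) as [_ X]; [|exact X]. split; [exact hu|]. unfold hnorm. rewrite nu, sqrt_1. lra. }
  set (be := sqrt (b1 * b1 + b2 * b2)).
  assert (Hbe2 : be * be = b1 * b1 + b2 * b2) by (apply sqrt_sqrt; nra).
  assert (Hbe0 : 0 <= be) by apply sqrt_pos.
  destruct (Req_dec be 0) as [Z|NZ].
  - assert (b1 = 0) by nra. assert (b2 = 0) by nra. rewrite H0, H1. nra.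
  - assert (Hbp : 0 < be) by lra.
    set (t1 := - b1 / be). set (t2 := - b2 / be).
    set (v := Lc H (Lc H u t1 f1) t2 f2).
    assert (Vn : re (hinner v v) = 1 + t1 * t1 + t2 * t2).
    { unfold v. rewrite Lc_norm by exact n2. rewrite Lc_norm by exact n1.
      rewrite Lc_inner, o2, o3, nu, o1. ring. }
    assert (T12 : t1 * t1 + t2 * t2 = 1).
    { unfold t1, t2. replace (- b1 / be * (- b1 / be) + - b2 / be * (- b2 / be)) with ((b1*b1+b2*b2)/(be*be)) by (field; lra). rewrite <- Hbe2. field. lra. }
    assert (Vu : re (hinner v u) = 1).
    { unfold v. rewrite !Lc_inner, nu, !(re_inner_sym H u), o1, o2. ring. }
    assert (Cv : cone u v).
    { split. - unfold v. apply herm_Lc; [apply herm_Lc|]; assumption.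
      - unfold hnorm. rewrite Vn, Vu. replace (1 + t1 * t1 + t2 * t2) with 2 by lra. lra. }
    destruct (Qp v Cv) as [_ Qv].
    unfold v, Lc in Qv. rewrite !Qa, !Qs in Qv. simpl in Qv.
    assert (K : re (q u) + t1 * re (q f1) + t2 * re (q f2) >= 0) by lra.
    assert (K2 : be * re (q u) - (b1 * re (q f1) + b2 * re (q f2)) >= 0).
    { unfold t1, t2 in K. apply Rmult_ge_compat_l with (r := be) in K; [|lra].
      field_simplify in K; [|lra]. nra. }
    assert (be <= a) by nra.
    nra.
Qed.
End Sep.

Fixpoint Rs (k : nat) (f : nat -> R) : R :=
  match k with O => 0 | S m => Rs m f + f m end.

Lemma Rs_le k f g : (forall l, f l <= g l) -> Rs k f <= Rs k g.
Proof. intros Hl; induction k; simpl; [lra|]. specialize (Hl k). lra. Qed.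

Lemma Rs_add k f g : Rs k (fun l => f l + g l) = Rs k f + Rs k g.
Proof. induction k; simpl; [ring|]. rewrite IHk. ring. Qed.

Lemma Rs_ext k f g : (forall l, f l = g l) -> Rs k f = Rs k g.
Proof. intros Hl; induction k; simpl; [lra|]. rewrite IHk, Hl. reflexivity. Qed.

Lemma re_hsum (H : HStar) k (phi : nat -> H) g :
  re (hinner (hsum k phi) g) = Rs k (fun l => re (hinner (phi l) g)).
Proof.
  induction k; simpl. - rewrite inner_zero_l. reflexivity.
  - rewrite re_inner_addl, IHk. reflexivity.
Qed.

Lemma conv_re (H : HStar) (q : nat -> H -> Cx) (p : nat -> H) (T : H -> H) z g :
  hermitian g -> re (hinner g g) = 1 -> (forall l, hermitian (p l)) ->
  (forall eps, eps > 0 -> exists N, forall k, (k >= N)%nat ->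
          hnorm (hsub (hsum k (fun l => hscal (q l z) (p l))) (T z)) < eps) ->
  forall eps, eps > 0 -> exists N, forall k, (k >= N)%nat ->
    Rabs (Rs k (fun l => re (q l z) * re (hinner (p l) g)) - re (hinner (T z) g)) < eps.
Proof.
  intros Hg Ng Hp Hc eps Heps. destruct (Hc eps Heps) as [N HN]. exists N. intros k Hk.
  specialize (HN k Hk). unfold hnorm in HN.
  set (x := hsub (hsum k (fun l => hscal (q l z) (p l))) (T z)) in *.
  pose proof (sqrt_lt_sq _ _ (hinner_pos H x) HN).
  pose proof (re_inner_sq_le H x g Ng).
  assert (E : re (hinner x g) = Rs k (fun l => re (q l z) * re (hinner (p l) g)) - re (hinner (T z) g)).
  { unfold x, hsub. rewrite hinner_addl, inner_opp_l. simpl. rewrite re_hsum.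
    rewrite (Rs_ext k _ (fun l => re (q l z) * re (hinner (p l) g))); [ring|].
    intro l. rewrite hinner_scall. simpl.
    rewrite (im_inner_herm H (p l) g (Hp l) Hg). ring. }
  rewrite <- E. apply Rabs_def1; nra.
Qed.

Lemma Cmul1 a : Cmul a Defs.C1 = a.
Proof. destruct a; apply Cext; simpl; ring. Qed.
Lemma Cmul0 a : Cmul a C0 = C0.
Proof. destruct a; apply Cext; simpl; ring. Qed.
Lemma Cadd0l a : Cadd C0 a = a.
Proof. destruct a; apply Cext; simpl; ring. Qed.
Lemma Cadd0r a : Cadd a C0 = a.
Proof. destruct a; apply Cext; simpl; ring. Qed.

Lemma two_more (H : HStar) (F : H -> Prop) (u e : H) :
  infinite_dim H -> hermitian_basis F -> F u -> F e -> u <> e ->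
  exists f1 f2, F f1 /\ F f2 /\ f1 <> u /\ f1 <> e /\ f2 <> u /\ f2 <> e /\ f1 <> f2.
Proof.
  intros Hinf HF Hu He Hue.
  destruct HF as (Hh & Hn & Ho & Hc).
  apply NNPP; intro Hno.
  destruct (classic (exists f1, F f1 /\ f1 <> u /\ f1 <> e)) as [[f1 (Hf1 & N1 & N2)]|Hnf].
  - assert (Hall : forall g, F g -> g = u \/ g = e \/ g = f1).
    { intros g Hg. apply NNPP; intro Hg'. apply Hno. exists f1, g.
      repeat split; auto; intro; subst; tauto. }
    destruct (Hinf (u :: e :: f1 :: nil)) as [x Hx]. apply Hx.
    exists (fun i => match i with 0%nat => hinner x u | 1%nat => hinner x e | _ => hinner x f1 end).
    apply (eq_of_inner H F); [exact Hc|]. intros g Hg. cbn [length hsum nth].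
    rewrite !hinner_addl, inner_zero_l, !hinner_scall.
    destruct (Hall g Hg) as [ -> | [ -> | -> ] ].
    + rewrite (Hn u Hu), (Ho e u He Hu (not_eq_sym Hue)), (Ho f1 u Hf1 Hu N1).
      rewrite Cmul1, !Cmul0, Cadd0l, !Cadd0r. reflexivity.
    + rewrite (Hn e He), (Ho u e Hu He Hue), (Ho f1 e Hf1 He N2).
      rewrite Cmul1, !Cmul0, Cadd0l, Cadd0l, Cadd0r. reflexivity.
    + rewrite (Hn f1 Hf1), (Ho u f1 Hu Hf1 (not_eq_sym N1)), (Ho e f1 He Hf1 (not_eq_sym N2)).
      rewrite Cmul1, !Cmul0, !Cadd0l. reflexivity.
  - assert (Hall : forall g, F g -> g = u \/ g = e).
    { intros g Hg. apply NNPP; intro Hg'. apply Hnf. exists g. tauto. }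
    destruct (Hinf (u :: e :: nil)) as [x Hx]. apply Hx.
    exists (fun i => match i with 0%nat => hinner x u | _ => hinner x e end).
    apply (eq_of_inner H F); [exact Hc|]. intros g Hg. cbn [length hsum nth].
    rewrite !hinner_addl, inner_zero_l, !hinner_scall.
    destruct (Hall g Hg) as [ -> | -> ].
    + rewrite (Hn u Hu), (Ho e u He Hu (not_eq_sym Hue)).
      rewrite Cmul1, !Cmul0, Cadd0l, !Cadd0r. reflexivity.
    + rewrite (Hn e He), (Ho u e Hu He Hue).
      rewrite Cmul1, !Cmul0, Cadd0l, Cadd0l. reflexivity.
Qed.

Theorem mainTheorem16 (H : HStar) (F : H -> Prop) (u e : H) (T : H -> H)
  (Hinf : infinite_dim H) (HF : hermitian_basis F)
  (Hu : F u) (He : F e) (Hue : u <> e)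
  (HTlin : linear_op T)
  (HTunit : (forall x y, hinner (T x) (T y) = hinner x y) /\
            (forall y, exists x, T x = y))
  (HTu : T u = e) (HTe : T e = u)
  (HTf : forall f, F f -> f <> u -> f <> e -> T f = f) :
  (* T(c_u) = c_e *)
  (forall z, cone e z <-> exists x, cone u x /\ T x = z) /\
  (* T^(n)(min c_u ∩ M_n(H)) = min c_e ∩ M_n(H) *)
  (forall n (z : nat -> nat -> H),
     min_cone e n z <-> mat_image T n (min_cone u n) z) /\
  (* T^(n)(max c_u ∩ M_n(H)) = max c_e ∩ M_n(H) *)
  (forall n (z : nat -> nat -> H),
     max_cone e n z <-> mat_image T n (max_cone u n) z) /\
  (* T : (H, max c_u) -> (H, max c_e) is unital and matrix positive *)
  (T u = e /\ forall n (z : nat -> nat -> H),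
     max_cone u n z -> max_cone e n (ampl T z)) /\
  (* T is not separable *)
  ~ (exists (q : nat -> H -> Cx) (p : nat -> H),
       (forall l, linear_fun (q l) /\ forall x, cone u x -> Cnonneg (q l x)) /\
       (forall l, cone e (p l)) /\
       (forall z eps, eps > 0 -> exists N, forall k, (k >= N)%nat ->
          hnorm (hsub (hsum k (fun l => hscal (q l z) (p l))) (T z)) < eps)).
Proof.
  destruct HTunit as [Hun _].
  assert (G : Tgood H F u e T) by exact (conj HF (conj Hu (conj He (conj Hue (conj HTlin (conj Hun (conj HTu (conj HTe HTf)))))))).
  split; [|split; [|split; [|split]]].
  - intros z; split.
    + intro Hz. exists (T z). split; [apply (cone_T H F u e T G e u z HTe Hz)|apply (TT H F u e T G)].
    + intros [x [Hx <-]]. apply (cone_T H F u e T G u e x HTu Hx).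
  - intros n z; split.
    + intro Hz. exists (ampl T z). split; [apply (min_T H F u e T G u e n z HTe HTu Hz)|].
      intros; unfold ampl; apply (TT H F u e T G).
    + intros [y [Hy Hyz]]. apply (min_ext H e n (ampl T y)).
      * intros; unfold ampl; apply Hyz; assumption.
      * apply (min_T H F u e T G e u n y HTu HTe Hy).
  - intros n z; split.
    + intro Hz. exists (ampl T z). split; [apply (max_T H F u e T G u e n z HTe HTu Hz)|].
      intros; unfold ampl; apply (TT H F u e T G).
    + intros [y [Hy Hyz]]. apply (max_ext H e n (ampl T y)).
      * intros; unfold ampl; apply Hyz; assumption.
      * apply (max_T H F u e T G e u n y HTu HTe Hy).
  - split; [exact HTu|]. intros n z Hz. apply (max_T H F u e T G e u n z HTu HTe Hz).
  - intros (q & p & Hq & Hp & Hconv).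
    destruct (two_more H F u e Hinf HF Hu He Hue) as (f1 & f2 & Hf1 & Hf2 & N1 & N2 & N3 & N4 & N5).
    destruct HF as (Hh & Hn & Ho & Hc).
    assert (Rn : forall f, F f -> re (hinner f f) = 1) by (intros f Hf; rewrite (Hn f Hf); reflexivity).
    assert (Ro : forall f g, F f -> F g -> f <> g -> re (hinner f g) = 0)
      by (intros f g Hf' Hg' Nfg; rewrite (Ho f g Hf' Hg' Nfg); reflexivity).
    assert (Hph : forall l, hermitian (p l)) by (intro l; apply (Hp l)).
    assert (TL : forall l, re (q l f1) * re (hinner (p l) f1) + re (q l f2) * re (hinner (p l) f2)
                          <= re (q l u) * re (hinner (p l) e)).
    { intro l. destruct (Hq l) as [Ql Qp].
      apply (term_le H u e f1 f2); auto; apply Ro; auto. }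
    assert (V1 := conv_re H q p T f1 f1 (Hh f1 Hf1) (Rn f1 Hf1) Hph (Hconv f1)).
    assert (V2 := conv_re H q p T f2 f2 (Hh f2 Hf2) (Rn f2 Hf2) Hph (Hconv f2)).
    assert (V3 := conv_re H q p T u e (Hh e He) (Rn e He) Hph (Hconv u)).
    rewrite (HTf f1 Hf1 N1 N2), (Rn f1 Hf1) in V1.
    rewrite (HTf f2 Hf2 N3 N4), (Rn f2 Hf2) in V2.
    rewrite HTu, (Rn e He) in V3.
    destruct (V1 (1/4) ltac:(lra)) as [K1 HK1].
    destruct (V2 (1/4) ltac:(lra)) as [K2 HK2].
    destruct (V3 (1/4) ltac:(lra)) as [K3 HK3].
    set (k := (K1 + K2 + K3)%nat).
    specialize (HK1 k ltac:(unfold k; lia)). specialize (HK2 k ltac:(unfold k; lia)).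
    specialize (HK3 k ltac:(unfold k; lia)).
    apply Rabs_def2 in HK1. apply Rabs_def2 in HK2. apply Rabs_def2 in HK3.
    pose proof (Rs_le k _ _ TL) as L. rewrite Rs_add in L. lra.
Qed.
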